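(* Let $f:\mathbb{R}^2\to\mathbb{R}^2$ be a Topologically Anosov homeomorphism and $z_0\in\mathrm{Fix}(f)$. If $\Omega(f)=\{z_0\}$, then there exists $x\in\mathbb{R}^2$ with $\alpha(x)=\emptyset$ or $\omega(x)=\emptyset$.
   Context: A homeomorphism $f:\mathbb{R}^2\to\mathbb{R}^2$ is Topologically Anosov (TA) if: (i) there is a continuous strictly positive $\epsilon:\mathbb{R}^2\to\mathbb{R}$ such that for all $x\neq y$ there is $k\in\mathbb{Z}$ with $\|f^k(x)-f^k(y)\|>\epsilon(f^k(x))$; and (ii) for every continuous strictly positive $\epsilon$ there is a continuous strictly positive $\delta$ such that every $\delta$-pseudo-orbit is $\epsilon$-shadowed by an orbit. A $\delta$-pseudo-orbit is a sequence $(x_n)_{n\in\mathbb{Z}}$ with $\|f(x_n)-x_{n+1}\|<\delta(f(x_n))$; it is $\epsilon$-shadowed by the orbit of $x$ if $\|x_n-f^n(x)\|<\epsilon(x_n)$ for all $n$. $\Omega(f)$ is the nonwandering set; $\alpha(x),\omega(x)$ are the $\alpha$- and $\omega$-limit sets. *)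

(* Defs.v *)
From Stdlib Require Import Reals ZArith Lra.
Open Scope R_scope.

Definition pt : Type := (R * R)%type.

Definition dist (p q : pt) : R :=
  sqrt ((fst p - fst q) ^ 2 + (snd p - snd q) ^ 2).

Definition continuous_map (f : pt -> pt) : Prop :=
  forall x e, 0 < e -> exists d, 0 < d /\
    forall y, dist x y < d -> dist (f x) (f y) < e.

Definition continuous_fun (h : pt -> R) : Prop :=
  forall x e, 0 < e -> exists d, 0 < d /\
    forall y, dist x y < d -> Rabs (h x - h y) < e.

Definition pos_cont (h : pt -> R) : Prop :=
  continuous_fun h /\ forall x, 0 < h x.

Definition homeo (f g : pt -> pt) : Prop :=
  continuous_map f /\ continuous_map g /\
  (forall x, g (f x) = x) /\ (forall x, f (g x) = x).

Definition iterz (f g : pt -> pt) (k : Z) (x : pt) : pt :=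
  match k with
  | Z0 => x
  | Zpos p => Nat.iter (Pos.to_nat p) f x
  | Zneg p => Nat.iter (Pos.to_nat p) g x
  end.

Definition expansive_TA (f g : pt -> pt) : Prop :=
  exists eps : pt -> R, pos_cont eps /\
    forall x y, x <> y -> exists k : Z,
      dist (iterz f g k x) (iterz f g k y) > eps (iterz f g k x).

Definition pseudo_orbit (f : pt -> pt) (delta : pt -> R) (xs : Z -> pt) : Prop :=
  forall n : Z, dist (f (xs n)) (xs (n + 1)%Z) < delta (f (xs n)).

Definition shadowed (f g : pt -> pt) (eps : pt -> R) (xs : Z -> pt) (x : pt) : Prop :=
  forall n : Z, dist (xs n) (iterz f g n x) < eps (xs n).

Definition shadowing_TA (f g : pt -> pt) : Prop :=
  forall eps : pt -> R, pos_cont eps ->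
    exists delta : pt -> R, pos_cont delta /\
      forall xs : Z -> pt, pseudo_orbit f delta xs ->
        exists x, shadowed f g eps xs x.

Definition TA (f g : pt -> pt) : Prop :=
  homeo f g /\ expansive_TA f g /\ shadowing_TA f g.

(* nonwandering: every neighbourhood U of x meets f^n(U) for some n >= 1 *)
Definition nonwandering (f : pt -> pt) (x : pt) : Prop :=
  forall r, 0 < r -> exists (n : nat) (y : pt),
    (1 <= n)%nat /\ dist x y < r /\ dist x (Nat.iter n f y) < r.

Definition omega_limit (f : pt -> pt) (x y : pt) : Prop :=
  forall r, 0 < r -> forall N : nat, exists n : nat,
    (N <= n)%nat /\ dist (Nat.iter n f x) y < r.

Definition alpha_limit (g : pt -> pt) (x y : pt) : Prop := omega_limit g x y.

(* Main.v *)
Require Import Defs.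
From Stdlib Require Import Reals ZArith.
From Stdlib Require Import Lra Lia Classical.
Require Import Defs.
Open Scope R_scope.

Lemma dist_refl p : dist p p = 0.
Proof. unfold dist. replace ((fst p - fst p) ^ 2 + (snd p - snd p) ^ 2) with 0 by ring.
apply sqrt_0. Qed.

Lemma dist_sym p q : dist p q = dist q p.
Proof. unfold dist. f_equal. ring. Qed.

Lemma dist_tri p q r : dist p r <= dist p q + dist q r.
Proof.
  unfold dist.
  set (u1 := fst p - fst q). set (u2 := snd p - snd q).
  set (v1 := fst q - fst r). set (v2 := snd q - snd r).
  replace (fst p - fst r) with (u1 + v1) by (unfold u1, v1; ring).
  replace (snd p - snd r) with (u2 + v2) by (unfold u2, v2; ring).
  set (A := u1 ^ 2 + u2 ^ 2). set (B := v1 ^ 2 + v2 ^ 2).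
  assert (HA : 0 <= A) by (unfold A; pose proof (pow2_ge_0 u1); pose proof (pow2_ge_0 u2); lra).
  assert (HB : 0 <= B) by (unfold B; pose proof (pow2_ge_0 v1); pose proof (pow2_ge_0 v2); lra).
  assert (Hc : u1 * v1 + u2 * v2 <= sqrt A * sqrt B).
  { rewrite <- sqrt_mult by lra.
    destruct (Rle_dec (u1 * v1 + u2 * v2) 0) as [H|H].
    - pose proof (sqrt_pos (A * B)). lra.
    - rewrite <- (sqrt_pow2 (u1 * v1 + u2 * v2)) by lra.
      apply sqrt_le_1_alt. unfold A, B.
      pose proof (pow2_ge_0 (u1 * v2 - u2 * v1)).
      assert ((u1 ^ 2 + u2 ^ 2) * (v1 ^ 2 + v2 ^ 2) = (u1 * v1 + u2 * v2) ^ 2 + (u1 * v2 - u2 * v1) ^ 2) by ring. lra. }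
  pose proof (sqrt_pos A). pose proof (sqrt_pos B).
  rewrite <- (sqrt_pow2 (sqrt A + sqrt B)) by lra.
  apply sqrt_le_1_alt.
  pose proof (sqrt_sqrt A HA). pose proof (sqrt_sqrt B HB).
  unfold A, B in *. nra.
Qed.

Lemma iterz_eq f g k x : iterz f g k x =
  if Z.leb 0 k then Nat.iter (Z.to_nat k) f x else Nat.iter (Z.to_nat (- k)) g x.
Proof. destruct k; reflexivity. Qed.

Lemma iterz_succ f g (Hfg : forall x, f (g x) = x) k x :
  f (iterz f g k x) = iterz f g (k + 1) x.
Proof.
  rewrite !iterz_eq.
  destruct (Z.leb_spec 0 k); destruct (Z.leb_spec 0 (k + 1)); try lia.
  - replace (Z.to_nat (k + 1)) with (S (Z.to_nat k)) by lia. reflexivity.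
  - assert (k = -1)%Z by lia. subst. simpl. apply Hfg.
  - replace (Z.to_nat (- k)) with (S (Z.to_nat (- (k + 1)))) by lia.
    simpl. apply Hfg.
Qed.

Lemma iterz_pos f g n x : iterz f g (Z.of_nat n) x = Nat.iter n f x.
Proof. rewrite iterz_eq. destruct (Z.leb_spec 0 (Z.of_nat n)); try lia.
  rewrite Nat2Z.id. reflexivity. Qed.

Lemma iterz_neg f g n x : iterz f g (- Z.of_nat n) x = Nat.iter n g x.
Proof. rewrite iterz_eq. destruct (Z.leb_spec 0 (- Z.of_nat n)).
  - assert (n = 0%nat) by lia. subst. reflexivity.
  - rewrite Z.opp_involutive, Nat2Z.id. reflexivity. Qed.

Lemma fg_iter (f g : pt -> pt) (Hfg : forall x, f (g x) = x) k x :
  Nat.iter k f (Nat.iter k g x) = x.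
Proof.
  induction k as [|k IH]; [reflexivity|].
  rewrite Nat.iter_succ_r. simpl. rewrite Hfg. apply IH.
Qed.

Lemma omega_nw (h : pt -> pt) x y : omega_limit h x y -> nonwandering h y.
Proof.
  intros Hw r hr.
  destruct (Hw r hr 0%nat) as [n [_ Hn]].
  destruct (Hw r hr (S n)) as [n' [Hn' Hn'2]].
  exists (n' - n)%nat, (Nat.iter n h x). split; [lia|]. split.
  - rewrite dist_sym. exact Hn.
  - rewrite <- Nat.iter_add. replace (n' - n + n)%nat with n' by lia.
    rewrite dist_sym. exact Hn'2.
Qed.

Lemma alpha_nw (f g : pt -> pt) (Hfg : forall x, f (g x) = x) x y :
  omega_limit g x y -> nonwandering f y.
Proof.
  intros Hw r hr.
  destruct (Hw r hr 0%nat) as [n [_ Hn]].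
  destruct (Hw r hr (S n)) as [n' [Hn' Hn'2]].
  exists (n' - n)%nat, (Nat.iter n' g x). split; [lia|]. split.
  - rewrite dist_sym. exact Hn'2.
  - assert (E : Nat.iter n' g x = Nat.iter (n' - n) g (Nat.iter n g x)).
    { rewrite <- Nat.iter_add. f_equal. lia. }
    rewrite E, fg_iter by exact Hfg.
    rewrite dist_sym. exact Hn.
Qed.

Theorem mainTheorem13 (f g : pt -> pt) (z0 : pt) :
  TA f g ->
  f z0 = z0 ->
  (forall x, nonwandering f x <-> x = z0) ->
  exists x : pt, (forall y, ~ alpha_limit g x y) \/ (forall y, ~ omega_limit f x y).
Proof.
  intros [[_ [_ [Hgf Hfg]]] [_ Hsh]] Hz Hnw.
  set (x1 := (fst z0 + 1, snd z0)).
  exists x1.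
  destruct (classic ((forall y, ~ alpha_limit g x1 y) \/ (forall y, ~ omega_limit f x1 y)))
    as [H|H]; [exact H|exfalso].
  apply not_or_and in H. destruct H as [H1 H2].
  apply not_all_ex_not in H1. destruct H1 as [y1 Hy1]. apply NNPP in Hy1.
  apply not_all_ex_not in H2. destruct H2 as [y2 Hy2]. apply NNPP in Hy2.
  assert (y1 = z0) by (apply Hnw; exact (alpha_nw f g Hfg _ _ Hy1)). subst y1.
  assert (y2 = z0) by (apply Hnw; exact (omega_nw _ _ _ Hy2)). subst y2.
  assert (Hx1 : nonwandering f x1).
  { intros r hr.
    destruct (Hsh (fun _ => r)) as [delta [[hdc hdp] hsd]].
    { split; [|intros; exact hr]. intros x e he. exists 1. split; [lra|].
      intros. rewrite Rminus_diag, Rabs_R0. exact he. }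
    pose proof (hdp z0) as hd0.
    destruct (hdc z0 (delta z0 / 2)) as [d1 [hd1 Hd1]]; [lra|].
    set (rho := Rmin d1 (delta z0 / 4)).
    assert (hrho : 0 < rho) by (unfold rho; apply Rmin_glb_lt; lra).
    destruct (Hy2 rho hrho 1%nat) as [n [hn Hn]].
    destruct (Hy1 rho hrho 1%nat) as [m [hm Hm]].
    set (P := (n + m)%nat).
    set (xs := fun k : Z => if Z.ltb k (Z.of_nat n) then iterz f g k x1
                            else iterz f g (k - Z.of_nat P) x1).
    destruct (hsd xs) as [y Hy].
    { intro k. unfold xs.
      destruct (Z.ltb_spec k (Z.of_nat n)); destruct (Z.ltb_spec (k + 1) (Z.of_nat n)).
      - rewrite iterz_succ, dist_refl by exact Hfg. apply hdp.
      - assert (Ek : (k + 1 = Z.of_nat n)%Z) by lia.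
        rewrite iterz_succ by exact Hfg. rewrite Ek.
        replace (Z.of_nat n - Z.of_nat P)%Z with (- Z.of_nat m)%Z by (unfold P; lia).
        rewrite iterz_pos, iterz_neg.
        set (a := Nat.iter n f x1) in *. set (b := Nat.iter m g x1) in *.
        assert (Hab : dist a b < delta z0 / 2).
        { pose proof (dist_tri a z0 b). rewrite (dist_sym z0 b) in H1.
          assert (rho <= delta z0 / 4) by apply Rmin_r. lra. }
        assert (Hda : Rabs (delta z0 - delta a) < delta z0 / 2).
        { apply Hd1. rewrite dist_sym. assert (rho <= d1) by apply Rmin_l. lra. }
        apply Rabs_def2 in Hda. lra.
      - lia.
      - rewrite iterz_succ by exact Hfg.
        replace (k - Z.of_nat P + 1)%Z with (k + 1 - Z.of_nat P)%Z by lia.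
        rewrite dist_refl. apply hdp. }
    exists P, y. split; [unfold P; lia|]. split.
    - specialize (Hy 0%Z). unfold xs in Hy.
      destruct (Z.ltb_spec 0 (Z.of_nat n)); [|lia]. exact Hy.
    - specialize (Hy (Z.of_nat P)). unfold xs in Hy.
      destruct (Z.ltb_spec (Z.of_nat P) (Z.of_nat n)); [unfold P in *; lia|].
      rewrite Z.sub_diag, iterz_pos in Hy. exact Hy. }
  apply Hnw in Hx1. unfold x1 in Hx1.
  assert (fst (fst z0 + 1, snd z0) = fst z0) by (rewrite Hx1; reflexivity).
  simpl in H. lra.
Qed.
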